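(* Let $\Omega := \{0,1\}^{\mathbb{Z}}$, let $\tau:\Omega\to\Omega$ be the shift $(\tau\omega)(x) := \omega(x-1)$, and let $T:\mathbb{Z}\to\mathbb{Z}$ be $Tx := x+1$. Let $\Delta\notin\mathbb{Z}$ be an extra symbol and set $T(\Delta):=\Delta$. Let $X:\Omega\to\mathbb{Z}\cup\{\Delta\}$ be a function such that $X^{-1}\{\Delta\}$ is countable and $X(\tau\omega)=T(X(\omega))$ for all $\omega\in\Omega$. Let $\mathcal{F}$ be any $\sigma$-algebra on $\Omega$ that contains all singletons and satisfies $\tau A\in\mathcal{F}$ whenever $A\in\mathcal{F}$ (where $\tau A:=\{\tau\omega:\omega\in A\}$), and suppose there is a measure $\mu$ on $\mathcal{F}$ with $\mu=\mu\circ\tau$, $\mu(\Omega)\in(0,\infty)$, and $\mu(\{\omega\})=0$ for all $\omega\in\Omega$. Then $X$ is not measurable with respect to $\mathcal{F}$, i.e., there exists $x\in\mathbb{Z}$ with $X^{-1}\{x\}\notin\mathcal{F}$.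
   Context: A function $X:\Omega\to\mathbb{Z}\cup\{\Delta\}$ is called measurable with respect to $\mathcal{F}$ if $X^{-1}\{x\}\in\mathcal{F}$ for all $x\in\mathbb{Z}$. *)

(* Defs.v *)
From mathcomp Require Import all_boot all_order all_algebra.
From mathcomp Require Import all_classical all_reals all_analysis.
Set Implicit Arguments. Unset Strict Implicit. Unset Printing Implicit Defensive.
Import Order.TTheory GRing.Theory Num.Theory.
Local Open Scope classical_set_scope.
Local Open Scope ring_scope.

Definition Omega := int -> bool.

Definition tau (w : Omega) : Omega := fun x => w (x - 1).

Definition ZD := option int.
Definition Delta : ZD := None.

Definition Tsh (z : ZD) : ZD :=
  match z with Some x => Some (x + 1) | None => None end.

Definition is_measure_on (R : realType) (T : Type) (F : set (set T))
    (mu : set T -> \bar R) : Prop :=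
  [/\ mu set0 = 0%E,
      (forall A, F A -> (0 <= mu A)%E) &
      (forall A : (set T)^nat, (forall n, F (A n)) -> trivIset setT A ->
         (fun n => \sum_(0 <= i < n) mu (A i))%E @ \oo --> mu (\bigcup_n A n))].

Definition measurable_wrt (F : set (set Omega)) (X : Omega -> ZD) : Prop :=
  forall x : int, F (X @^-1` [set Some x]).

(* Main.v *)
Require Import Defs.
From mathcomp Require Import all_boot all_order all_algebra.
From mathcomp Require Import all_classical all_reals all_analysis.
From mathcomp Require Import zify.
Import Order.TTheory GRing.Theory Num.Theory.
Local Open Scope classical_set_scope.
Local Open Scope ring_scope.

Definition g (n : nat) : int := if odd n then - (n./2.+1)%:Z else (n./2)%:Z.

Lemma g_inj : injective g.
Proof.
move=> m n; rewrite /g.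
case: (boolP (odd m)) => om; case: (boolP (odd n)) => on.
- move/eqP; rewrite eqr_opp => /eqP [] h.
  by rewrite -(odd_double_half m) -(odd_double_half n) om on h.
- move=> h. have : (- (m./2.+1)%:Z < 0) by rewrite oppr_lt0.
  by rewrite h ltNge.
- move=> h. have : (- (n./2.+1)%:Z < 0) by rewrite oppr_lt0.
  by rewrite -h ltNge.
- case=> h. by rewrite -(odd_double_half m) -(odd_double_half n) (negbTE om) (negbTE on) h.
Qed.

Lemma g_surj (x : int) : exists n, g n = x.
Proof.
case: x => m.
- exists m.*2; by rewrite /g odd_double doubleK.
- exists m.*2.+1; rewrite /g /= odd_double /= uphalf_double.
  by rewrite NegzE.
Qed.

Definition tauinv (w : Omega) : Omega := fun x => w (x + 1).
Lemma tauK w : tau (tauinv w) = w.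
Proof. by apply: funext => x; rewrite /tau /tauinv subrK. Qed.
Lemma sum_le_lim (R : realType) (u : (\bar R)^nat) (l : \bar R) :
  (forall n, (0 <= u n)%E) ->
  (fun n => \sum_(0 <= i < n) u i)%E @ \oo --> l ->
  forall k, (\sum_(0 <= i < k) u i <= l)%E.
Proof.
move=> u0 H k; rewrite -(cvg_lim _ H) //.
exact: nneseries_lim_ge.
Qed.

Lemma sum0_lim (R : realType) (u : (\bar R)^nat) (l : \bar R) :
  (forall n, u n = 0%E) ->
  (fun n => \sum_(0 <= i < n) u i)%E @ \oo --> l -> l = 0%E.
Proof.
move=> u0 H; rewrite -(cvg_lim _ H) //.
have -> : (fun n => \sum_(0 <= i < n) u i)%E = fun _ => 0%E.
  by apply: funext => n; rewrite big1.
exact: lim_cst.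
Qed.

Theorem lemma2 (R : realType) (X : Omega -> ZD) (F : set (set Omega))
    (mu : set Omega -> \bar R) :
  countable (X @^-1` [set Delta]) ->
  (forall w : Omega, X (tau w) = Tsh (X w)) ->
  sigma_algebra setT F ->
  (forall w : Omega, F [set w]) ->
  (forall A, F A -> F (tau @` A)) ->
  is_measure_on F mu ->
  (forall A, F A -> mu (tau @` A) = mu A) ->
  (0 < mu setT)%E -> (mu setT < +oo)%E ->
  (forall w : Omega, mu [set w] = 0%E) ->
  ~ measurable_wrt F X /\ exists x : int, ~ F (X @^-1` [set Some x]).
Proof.
move=> Dc HX [F0 FC FU] F1 Ftau [mu0 mu_ge0 muU] mutau mupos mufin mu1.
suff nm : ~ measurable_wrt F X.
  split=> //; apply: contrapT => H; apply: nm => x; apply: contrapT => Hx.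
  by apply: H; exists x.
move=> FA.
pose A := fun x : int => X @^-1` [set Some x].
have tauA x : tau @` A x = A (x + 1).
  apply/seteqP; split => w.
    by case=> v Av <-; rewrite /A /= HX Av.
  move=> Aw; exists (tauinv w); last exact: tauK.
  move: Aw; rewrite /A /= -{1}(tauK w) HX.
  by case: (X (tauinv w)) => // y [] /addIr ->.
have step x : mu (A (x + 1)) = mu (A x) by rewrite -tauA mutau //; apply: FA.
have muA x : mu (A x) = mu (A 0).
  case: x => n; elim: n => [|n IH] //.
  - have -> : Posz n.+1 = Posz n + 1 by lia.
    by rewrite step.
  - have e : Negz 0 + 1 = 0 by lia.
    by rewrite -e step.
  - have e : Negz n.+1 + 1 = Negz n by lia.
    by rewrite -IH -e step.
pose D := X @^-1` [set Delta].
have [FD muD] : F D /\ mu D = 0%E.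
  have [D0|[e De]] : D = set0 \/ exists e : nat -> Omega, D = range e.
    move: Dc => /pfcard_geP [h|/surjfunPex [f h]]; [by left|by right; exists f].
    by rewrite D0.
  pose E := seqDU (fun n => [set e n]).
  have FE n : F (E n) /\ mu (E n) = 0%E.
    have : E n = set0 \/ E n = [set e n].
      rewrite /E /seqDU.
      case: (pselect (exists k, (k < n)%N /\ e k = e n)) => [[k [kn ekn]]|N].
        left; apply/seteqP; split => // w [/= -> ]; apply.
        by rewrite -(bigcup_mkord n (fun k => [set e k])); exists k.
      right; apply/seteqP; split => w; first by case.
      move=> /= ->; split=> //; rewrite -(bigcup_mkord n (fun k => [set e k])) => -[k /= kn ekn].
      by apply: N; exists k; split.
    by case=> ->; split.
  have DE : D = \bigcup_n E n.
    rewrite De /E -seqDU_bigcup_eq; apply/seteqP; split => w.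
      by case=> k _ <-; exists k.
    by case=> k _ /= ->; exists k.
  split; first by rewrite DE; apply: FU => n; case: (FE n).
  apply: (@sum0_lim _ (fun n => mu (E n))); first by move=> n; case: (FE n).
  rewrite DE; apply: muU; [by move=> n; case: (FE n) | exact: trivIset_seqDU].
pose B := fun n => if n is k.+1 then A (g k) else D.
have FB n : F (B n) by case: n => [|k] //=; exact: FA.
have trivB : trivIset setT B.
  move=> i j _ _ [w [Bi Bj]].
  case: i Bi => [|i] Bi; case: j Bj => [|j] Bj //.
  - by move: Bi Bj; rewrite /= /D /A /= => ->.
  - by move: Bi Bj; rewrite /= /D /A /= => ->.
  - move: Bi Bj; rewrite /= /A /= => -> [] /g_inj -> //.
have covB : \bigcup_n B n = setT.
  apply/seteqP; split => // w _.
  case E: (X w) => [x|].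
    have [k gk] := g_surj x; exists k.+1 => //.
    by rewrite /= /A /= E gk.
  by exists 0%N.
have HS := muU B FB trivB; rewrite covB in HS.
pose c := mu (A 0).
have sumE n : (\sum_(0 <= i < n.+1) mu (B i) = c *+ n)%E.
  rewrite big_nat_recl //= muD add0e.
  under eq_bigr do rewrite muA.
  by rewrite sumr_const_nat subn0.
have c0 : (0 <= c)%E by apply: mu_ge0; apply: FA.
have := @sum_le_lim R (fun n => mu (B n)) _ (fun n => mu_ge0 _ (FB n)) HS.
case: (eqVneq c 0%E) => [cz|cnz] le.
  have := @sum0_lim R (fun n => mu (B n)) _ ^~ HS.
  move: mupos => /[swap] -> //; first by rewrite ltxx.
  by case=> [|n] /=; rewrite ?muA.
have := le 2%N; rewrite sumE.
move: mufin c0 cnz le sumE; case: (mu setT) => [M| |] //= _; last first.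
  move=> c0' _ _ _ h; have := @le_trans _ _ c 0%E -oo%E c0' h.
  by rewrite leeNy_eq.
case: c => [r| |] //= r0 rn0 le sumE _.
have rpos : 0 < r by rewrite lt0r; rewrite lee_fin in r0; rewrite r0 andbT; apply: contra rn0 => /eqP ->.
have := le (Num.trunc (M / r)).+2; rewrite sumE -EFin_natmul lee_fin.
apply/negP; rewrite -ltNge.
rewrite -mulr_natr -ltr_pdivrMl // mulrC.
exact: truncnS_gt.
Qed.
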